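(* Let $E$ be a pseudo effect algebra satisfying (RDP) and let $s_1,s_2\in\mathcal S(E)$. Then $s_1\wedge s_2\in\mathcal S(E)$ if and only if $s_1=s_2$, if and only if $s_1\vee s_2\in\mathcal S(E)$ (lattice operations taken in $\mathcal J(E)$). Moreover, putting $s_\lambda:=\lambda s_1+(1-\lambda)s_2$ for $\lambda\in[0,1]$, we have $s_1\wedge s_2=\bigwedge\{s_\lambda:\lambda\in[0,1]\}$ (infimum in $\mathcal J(E)$), and this is a measure on $E$.
   Context: Pseudo effect algebra: partial algebra $(E;+,0,1)$ such that for all $a,b,c$: (i) $a+b$ and $(a+b)+c$ exist iff $b+c$ and $a+(b+c)$ exist, and then they are equal; (ii) there is exactly one $d$ and one $e$ with $a+d=e+a=1$; (iii) if $a+b$ exists there are $d,e$ with $a+b=d+a=b+e$; (iv) if $1+a$ or $a+1$ exists then $a=0$. (RDP): whenever $a_1+a_2=b_1+b_2$ there are $d_1,\dots,d_4$ with $d_1+d_2=a_1$, $d_3+d_4=a_2$, $d_1+d_3=b_1$, $d_2+d_4=b_2$. Signed measure: $m:E\to\mathbb R$ additive on defined sums; measure: nonnegative signed measure; state: measure with $s(1)=1$; $\mathcal S(E)$: set of states. $\mathcal J(E)$: signed measures that are differences of two measures, ordered by $m_1\le^+m_2$ iff $m_2-m_1$ is a measure; under (RDP) it is a Dedekind complete lattice-ordered group. *)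

(* Defs.v *)
From Stdlib Require Import Reals.
Open Scope R_scope.

(* Pseudo effect algebra (E; +, 0, 1) with + a partial operation,
   modelled as E -> E -> option E (None = undefined). *)
Record PEA := {
  pcar :> Type;
  padd : pcar -> pcar -> option pcar;
  pzero : pcar;
  pone : pcar;
  (* (i): a+b and (a+b)+c exist iff b+c and a+(b+c) exist, and then equal.
     Expressed as equality of the (partial) results of both bracketings. *)
  pea_assoc : forall a b c : pcar,
    (match padd a b with Some d => padd d c | None => None end) =
    (match padd b c with Some e => padd a e | None => None end);
  pea_compl : forall a : pcar,
    (exists! d, padd a d = Some pone) /\ (exists! e, padd e a = Some pone);
  pea_conj : forall a b x : pcar, padd a b = Some x ->
    exists d e, padd d a = Some x /\ padd b e = Some x;
  pea_one : forall a : pcar,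
    (padd pone a <> None \/ padd a pone <> None) -> a = pzero
}.

Definition RDP (E : PEA) : Prop :=
  forall a1 a2 b1 b2 x : E,
    padd E a1 a2 = Some x -> padd E b1 b2 = Some x ->
    exists d1 d2 d3 d4 : E,
      padd E d1 d2 = Some a1 /\ padd E d3 d4 = Some a2 /\
      padd E d1 d3 = Some b1 /\ padd E d2 d4 = Some b2.

Definition signed_measure (E : PEA) (m : E -> R) : Prop :=
  forall a b c : E, padd E a b = Some c -> m c = m a + m b.

Definition is_measure (E : PEA) (m : E -> R) : Prop :=
  signed_measure E m /\ forall a : E, 0 <= m a.

Definition is_state (E : PEA) (m : E -> R) : Prop :=
  is_measure E m /\ m (pone E) = 1.

Definition inJ (E : PEA) (m : E -> R) : Prop :=
  exists m1 m2 : E -> R, is_measure E m1 /\ is_measure E m2 /\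
    forall a : E, m a = m1 a - m2 a.

Definition leJ (E : PEA) (m1 m2 : E -> R) : Prop :=
  is_measure E (fun a => m2 a - m1 a).

Definition is_infJ (E : PEA) (S : (E -> R) -> Prop) (m : E -> R) : Prop :=
  inJ E m /\ (forall t, S t -> leJ E m t) /\
  (forall k, inJ E k -> (forall t, S t -> leJ E k t) -> leJ E k m).

Definition is_supJ (E : PEA) (S : (E -> R) -> Prop) (m : E -> R) : Prop :=
  inJ E m /\ (forall t, S t -> leJ E t m) /\
  (forall k, inJ E k -> (forall t, S t -> leJ E t k) -> leJ E m k).

Definition is_meetJ (E : PEA) (s1 s2 m : E -> R) : Prop :=
  is_infJ E (fun t => t = s1 \/ t = s2) m.
Definition is_joinJ (E : PEA) (s1 s2 m : E -> R) : Prop :=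
  is_supJ E (fun t => t = s1 \/ t = s2) m.

Definition convJ (E : PEA) (s1 s2 : E -> R) (l : R) : E -> R :=
  fun a => l * s1 a + (1 - l) * s2 a.

(* Main.v *)
Require Import Defs.
From Stdlib Require Import Reals Lra FunctionalExtensionality.
Open Scope R_scope.

Lemma assoc_l (E : PEA) (a b c d x : E) :
  padd E a b = Some d -> padd E d c = Some x ->
  exists e, padd E b c = Some e /\ padd E a e = Some x.
Proof.
  intros H1 H2. pose proof (pea_assoc E a b c) as A.
  rewrite H1, H2 in A. destruct (padd E b c) as [e|] eqn:He; [|discriminate].
  exists e; auto.
Qed.

Lemma assoc_r (E : PEA) (a b c e x : E) :
  padd E b c = Some e -> padd E a e = Some x ->
  exists d, padd E a b = Some d /\ padd E d c = Some x.
Proof.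
  intros H1 H2. pose proof (pea_assoc E a b c) as A.
  rewrite H1, H2 in A. destruct (padd E a b) as [d|] eqn:Hd; [|discriminate].
  exists d; auto.
Qed.

Lemma one_zero (E : PEA) : padd E (pone E) (pzero E) = Some (pone E).
Proof.
  destruct (pea_compl E (pone E)) as [[d [Hd _]] _].
  assert (d = pzero E) by (apply pea_one; left; rewrite Hd; discriminate).
  subst; auto.
Qed.

Lemma zero_one (E : PEA) : padd E (pzero E) (pone E) = Some (pone E).
Proof.
  destruct (pea_compl E (pone E)) as [_ [d [Hd _]]].
  assert (d = pzero E) by (apply pea_one; right; rewrite Hd; discriminate).
  subst; auto.
Qed.

Lemma addr0 (E : PEA) (a : E) : padd E a (pzero E) = Some a.
Proof.
  destruct (pea_compl E a) as [_ [e [He _]]].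
  destruct (assoc_l E e a (pzero E) (pone E) (pone E) He (one_zero E)) as [x [Hx Hex]].
  destruct (pea_compl E e) as [[d [Hd Hu]] _].
  assert (x = a) by (rewrite <- (Hu x Hex); apply Hu; auto).
  subst; auto.
Qed.

Lemma add0r (E : PEA) (a : E) : padd E (pzero E) a = Some a.
Proof.
  destruct (pea_compl E a) as [[d [Hd _]] _].
  destruct (assoc_r E (pzero E) a d (pone E) (pone E) Hd (zero_one E)) as [y [Hy Hyd]].
  destruct (pea_compl E d) as [_ [e [He Hu]]].
  assert (y = a) by (rewrite <- (Hu y Hyd); apply Hu; auto).
  subst; auto.
Qed.

Lemma meet_exists (E : PEA) (s1 s2 : E -> R)
  (h1 : is_state E s1) (h2 : is_state E s2) :
  exists mi : E -> R,
    (forall a a1 a2, padd E a1 a2 = Some a -> mi a <= s1 a1 + s2 a2) /\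
    (forall a r, (forall a1 a2, padd E a1 a2 = Some a -> r <= s1 a1 + s2 a2) -> r <= mi a).
Proof.
  destruct h1 as [[_ P1] _]. destruct h2 as [[_ P2] _].
  set (Q := fun (a : E) (r : R) => exists a1 a2, padd E a1 a2 = Some a /\ r = -(s1 a1 + s2 a2)).
  assert (B : forall a, bound (Q a)).
  { intro a. exists 0. intros r [a1 [a2 [_ Hr]]]. rewrite Hr. specialize (P1 a1); specialize (P2 a2); lra. }
  assert (N : forall a, exists r, Q a r).
  { intro a. exists (-(s1 a + s2 (pzero E))). exists a, (pzero E). split; auto. apply addr0. }
  exists (fun a => - proj1_sig (completeness (Q a) (B a) (N a))).
  split.
  - intros a a1 a2 H. generalize (completeness (Q a) (B a) (N a)); intros [m [Hub Hl]]; simpl.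
    assert (Q a (-(s1 a1 + s2 a2))) by (exists a1, a2; auto).
    specialize (Hub _ H0). lra.
  - intros a r Hr. generalize (completeness (Q a) (B a) (N a)); intros [m [Hub Hl]]; simpl.
    assert (m <= -r).
    { apply Hl. intros x [a1 [a2 [H ->]]]. specialize (Hr _ _ H). lra. }
    lra.
Qed.

Lemma inJ_signed (E : PEA) (k : E -> R) : inJ E k -> signed_measure E k.
Proof.
  intros [m1 [m2 [[S1 _] [[S2 _] Hk]]]] a b c H.
  rewrite !Hk, (S1 _ _ _ H), (S2 _ _ _ H). ring.
Qed.

Lemma meas_zero (E : PEA) (m : E -> R) : signed_measure E m -> m (pzero E) = 0.
Proof. intros S. pose proof (S _ _ _ (addr0 E (pzero E))). lra. Qed.

Theorem proposition4p3 (E : PEA) (hRDP : RDP E) (s1 s2 : E -> R)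
  (h1 : is_state E s1) (h2 : is_state E s2) :
  exists mi mj : E -> R,
    is_meetJ E s1 s2 mi /\ is_joinJ E s1 s2 mj /\
    (is_state E mi <-> s1 = s2) /\ (s1 = s2 <-> is_state E mj) /\
    is_infJ E (fun t => exists l, 0 <= l <= 1 /\ t = convJ E s1 s2 l) mi /\
    is_measure E mi.
Proof.
  destruct (meet_exists E s1 s2 h1 h2) as [mi [G1 G2]].
  destruct h1 as [[S1 P1] O1]. destruct h2 as [[S2 P2] O2].
  assert (Z1 := meas_zero E s1 S1). assert (Z2 := meas_zero E s2 S2).
  assert (L1 : forall a, mi a <= s1 a).
  { intro a. pose proof (G1 _ _ _ (addr0 E a)). lra. }
  assert (L2 : forall a, mi a <= s2 a).
  { intro a. pose proof (G1 _ _ _ (add0r E a)). lra. }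
  assert (Mnn : forall a, 0 <= mi a).
  { intros a. apply G2. intros a1 a2 _. specialize (P1 a1); specialize (P2 a2); lra. }
  assert (SM : signed_measure E mi).
  { intros a b c H. apply Rle_antisym.
    -
      assert (forall a1 a2 b1 b2, padd E a1 a2 = Some a -> padd E b1 b2 = Some b ->
                mi c <= s1 a1 + s2 a2 + (s1 b1 + s2 b2)).
      { intros a1 a2 b1 b2 Ha Hb.
        destruct (assoc_l E a1 a2 b a c Ha H) as [e [He Hae]].
        destruct (assoc_r E a2 b1 b2 b e Hb He) as [x [Hx Hxe]].
        destruct (pea_conj E a2 b1 x Hx) as [d [e' [Hd _]]].
        destruct (assoc_l E d a2 b2 x e Hd Hxe) as [f [Hf Hdf]].
        destruct (assoc_r E a1 d f e c Hdf Hae) as [g [Hg Hgf]].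
        pose proof (G1 _ _ _ Hgf). rewrite (S1 _ _ _ Hg) in H0.
        rewrite (S2 _ _ _ Hf) in H0.
        pose proof (S1 _ _ _ Hx). pose proof (S1 _ _ _ Hd). lra. }
      assert (mi c - mi b <= mi a).
      { apply G2. intros a1 a2 Ha.
        assert (mi c - (s1 a1 + s2 a2) <= mi b).
        { apply G2. intros b1 b2 Hb. specialize (H0 _ _ _ _ Ha Hb). lra. }
        lra. }
      lra.
    - apply G2. intros c1 c2 Hc.
      destruct (hRDP c1 c2 a b c Hc H) as [d1 [d2 [d3 [d4 [H12 [H34 [H13 H24]]]]]]].
      pose proof (G1 _ _ _ H13). pose proof (G1 _ _ _ H24).
      rewrite (S1 _ _ _ H12), (S2 _ _ _ H34). lra. }
  assert (Mmeas : is_measure E mi) by (split; auto).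
  assert (InJmi : inJ E mi).
  { exists mi, (fun _ => 0). split; auto. split.
    - split; [intros a b c _; ring | intros; lra].
    - intros; ring. }
  assert (LB : forall k, inJ E k -> (forall a, k a <= s1 a) -> (forall a, k a <= s2 a) -> leJ E k mi).
  { intros k Hk K1 K2. pose proof (inJ_signed E k Hk) as SK. split.
    - intros a b c H. rewrite (SM _ _ _ H), (SK _ _ _ H). ring.
    - intros a. assert (k a <= mi a); [|lra]. apply G2. intros a1 a2 H.
      rewrite (SK _ _ _ H). specialize (K1 a1); specialize (K2 a2). lra. }
  assert (St : mi (pone E) = 1 -> s1 = s2).
  { intros H1. apply functional_extensionality. intro a.
    destruct (pea_compl E a) as [[d [Hd _]] _].
    pose proof (S1 _ _ _ Hd). pose proof (S2 _ _ _ Hd). pose proof (SM _ _ _ Hd).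
    pose proof (L1 a). pose proof (L1 d). pose proof (L2 a). pose proof (L2 d). lra. }
  assert (Eq : s1 = s2 -> forall a, mi a = s1 a).
  { intros Heq a. subst s2. apply Rle_antisym; auto. apply G2.
    intros a1 a2 H. rewrite (S1 _ _ _ H). lra. }
  exists mi, (fun a => s1 a + s2 a - mi a).
  split; [|split; [|split; [|split; [|split]]]].
  - split; [auto|split].
    + intros t [-> | ->]; split.
      * intros a b c H. rewrite (SM _ _ _ H), (S1 _ _ _ H). ring.
      * intros a; specialize (L1 a); lra.
      * intros a b c H. rewrite (SM _ _ _ H), (S2 _ _ _ H). ring.
      * intros a; specialize (L2 a); lra.
    + intros k Hk Hb. apply LB; auto.
      * intros a. destruct (Hb s1 (or_introl eq_refl)) as [_ N]. specialize (N a); lra.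
      * intros a. destruct (Hb s2 (or_intror eq_refl)) as [_ N]. specialize (N a); lra.
  - split; [|split].
    + exists (fun a => s1 a + s2 a), mi. split; [|split; auto].
      * split; [intros a b c H; rewrite (S1 _ _ _ H), (S2 _ _ _ H); ring
               | intros a; specialize (P1 a); specialize (P2 a); lra].
    + intros t [-> | ->]; split.
      * intros a b c H. rewrite (SM _ _ _ H), (S1 _ _ _ H), (S2 _ _ _ H). ring.
      * intros a; specialize (L2 a); lra.
      * intros a b c H. rewrite (SM _ _ _ H), (S1 _ _ _ H), (S2 _ _ _ H). ring.
      * intros a; specialize (L1 a); lra.
    + intros k Hk Hb. pose proof (inJ_signed E k Hk) as SK.
      destruct (Hb s1 (or_introl eq_refl)) as [_ N1].
      destruct (Hb s2 (or_intror eq_refl)) as [_ N2]. split.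
      * intros a b c H. rewrite (SM _ _ _ H), (S1 _ _ _ H), (S2 _ _ _ H), (SK _ _ _ H). ring.
      * intros a. assert (s1 a + s2 a - k a <= mi a); [|lra]. apply G2. intros a1 a2 H.
        rewrite (S1 _ _ _ H), (S2 _ _ _ H), (SK _ _ _ H).
        specialize (N1 a2); specialize (N2 a1). lra.
  - split.
    + intros [_ H1]. apply St; auto.
    + intros Heq. split; auto. rewrite (Eq Heq). auto.
  - split.
    + intros Heq. pose proof (Eq Heq) as Ea. split.
      * split.
        -- intros a b c H. rewrite (SM _ _ _ H), (S1 _ _ _ H), (S2 _ _ _ H). ring.
        -- intros a. rewrite Ea. subst s2. specialize (P1 a); lra.
      * rewrite Ea. subst s2. lra.
    + intros [_ H1]. apply St. lra.
  - split; [auto|split].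
    + intros t [l [Hl ->]]. split.
      * intros a b c H. unfold convJ. rewrite (SM _ _ _ H), (S1 _ _ _ H), (S2 _ _ _ H). ring.
      * intros a. unfold convJ.
        assert (0 <= l * (s1 a - mi a)) by (apply Rmult_le_pos; [lra | specialize (L1 a); lra]).
        assert (0 <= (1 - l) * (s2 a - mi a)) by (apply Rmult_le_pos; [lra | specialize (L2 a); lra]).
        nra.
    + intros k Hk Hb. apply LB; auto.
      * intros a. assert (exists l, 0 <= l <= 1 /\ convJ E s1 s2 1 = convJ E s1 s2 l)
          by (exists 1; split; [lra|auto]).
        destruct (Hb _ H) as [_ N]. specialize (N a). unfold convJ in N. lra.
      * intros a. assert (exists l, 0 <= l <= 1 /\ convJ E s1 s2 0 = convJ E s1 s2 l)
          by (exists 0; split; [lra|auto]).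
        destruct (Hb _ H) as [_ N]. specialize (N a). unfold convJ in N. lra.
  - auto.
Qed.
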